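(* Let $\beta>\alpha>0$ and let $q=(q_1,q_2,q_3,q_4)\in(\mathbb{R}^2)^4$ be a convex non-collinear central configuration of the planar Newtonian 4-body problem with masses $m_1=m_2=\beta$, $m_3=m_4=\alpha$, the vertices being labelled so that $q_1,q_2,q_3,q_4$ is the cyclic order around the convex quadrilateral (so the equal masses occupy adjacent vertices). If $r_{14}=r_{23}$, then the configuration is symmetric and forms an isosceles trapezoid: the side $q_1q_2$ is parallel to the side $q_3q_4$ (and $r_{14}=r_{23}$).
   Context: Bodies have positions $q_i\in\mathbb{R}^2$ and masses $m_i>0$, $i=1,\dots,4$; $r_{ij}=\|q_i-q_j\|$. The Newtonian potential is $U(q)=\sum_{i<j}m_im_j/r_{ij}$ (gravitational constant $1$). A configuration $q$ with $q_i\neq q_j$ for all $i\neq j$ and center of mass $\sum_i m_iq_i=0$ is a central configuration if there is a constant $\lambda$ with $\frac{1}{m_i}\frac{\partial U}{\partial q_i}=\lambda q_i$ for all $i$, i.e. $\sum_{j\neq i} m_j\frac{q_j-q_i}{r_{ij}^3}=\lambda q_i$. ''Convex non-collinear'' means the four points are the vertices of a strictly convex quadrilateral (no three of them collinear). *)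

(* Defs.v *)
From Stdlib Require Import Reals List.
Import ListNotations.
Open Scope R_scope.

Definition pt := (R * R)%type.

Definition rdist (p q : pt) : R :=
  sqrt ((fst p - fst q)^2 + (snd p - snd q)^2).

Definition turn (a b c : pt) : R :=
  (fst b - fst a) * (snd c - snd b) - (snd b - snd a) * (fst c - fst b).

Definition idx : list nat := [1%nat; 2%nat; 3%nat; 4%nat].

Definition sumR (f : nat -> R) (l : list nat) : R :=
  fold_right (fun i acc => f i + acc) 0 l.

Definition central_configuration (m : nat -> R) (q : nat -> pt) : Prop :=
  (forall i j, In i idx -> In j idx -> i <> j -> q i <> q j) /\
  sumR (fun i => m i * fst (q i)) idx = 0 /\
  sumR (fun i => m i * snd (q i)) idx = 0 /\
  exists lambda : R, forall i, In i idx ->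
    sumR (fun j => if Nat.eqb j i then 0
                   else m j * (fst (q j) - fst (q i)) / (rdist (q i) (q j))^3) idx
      = lambda * fst (q i) /\
    sumR (fun j => if Nat.eqb j i then 0
                   else m j * (snd (q j) - snd (q i)) / (rdist (q i) (q j))^3) idx
      = lambda * snd (q i).

(* q1,q2,q3,q4 are, in this cyclic order, the vertices of a strictly convex
   quadrilateral (no three collinear): all consecutive turns strictly of the same sign. *)
Definition convex_cyclic (q : nat -> pt) : Prop :=
  (0 < turn (q 1%nat) (q 2%nat) (q 3%nat) /\ 0 < turn (q 2%nat) (q 3%nat) (q 4%nat) /\
   0 < turn (q 3%nat) (q 4%nat) (q 1%nat) /\ 0 < turn (q 4%nat) (q 1%nat) (q 2%nat)) \/
  (turn (q 1%nat) (q 2%nat) (q 3%nat) < 0 /\ turn (q 2%nat) (q 3%nat) (q 4%nat) < 0 /\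
   turn (q 3%nat) (q 4%nat) (q 1%nat) < 0 /\ turn (q 4%nat) (q 1%nat) (q 2%nat) < 0).

Definition parallel (a b c d : pt) : Prop :=
  (fst b - fst a) * (snd d - snd c) - (snd b - snd a) * (fst d - fst c) = 0.

(* Mirror symmetry exchanging q1 <-> q2 and q3 <-> q4: the segments q1q2 and q3q4
   are parallel and have a common perpendicular bisector (the line joining
   their midpoints is perpendicular to q1q2). *)
Definition symmetric_isosceles_trapezoid (q : nat -> pt) : Prop :=
  parallel (q 1%nat) (q 2%nat) (q 3%nat) (q 4%nat) /\
  ((fst (q 1%nat) + fst (q 2%nat)) / 2 - (fst (q 3%nat) + fst (q 4%nat)) / 2)
     * (fst (q 2%nat) - fst (q 1%nat)) +
  ((snd (q 1%nat) + snd (q 2%nat)) / 2 - (snd (q 3%nat) + snd (q 4%nat)) / 2)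
     * (snd (q 2%nat) - snd (q 1%nat)) = 0.

(* Main.v *)
Require Import Defs.
From Stdlib Require Import Reals List Lra Psatz.
Open Scope R_scope.

Ltac lc H1 H2 u v :=
  match type of H1 with ?e1 = 0 => match type of H2 with ?e2 = 0 =>
    transitivity (e1*u - e2*v); [ring | rewrite H1, H2; ring] end end.

Lemma cross_eqs (a b x1 y1 x2 y2 x3 y3 x4 y4 R12 R13 R14 R23 R24 R34 lam : R) :
  0 < a -> 0 < b ->
  b*x1 + (b*x2 + (a*x3 + (a*x4 + 0))) = 0 ->
  b*y1 + (b*y2 + (a*y3 + (a*y4 + 0))) = 0 ->
  0 + (b*(x2-x1)*R12 + (a*(x3-x1)*R13 + (a*(x4-x1)*R14 + 0))) = lam*x1 ->
  0 + (b*(y2-y1)*R12 + (a*(y3-y1)*R13 + (a*(y4-y1)*R14 + 0))) = lam*y1 ->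
  b*(x1-x2)*R12 + (0 + (a*(x3-x2)*R23 + (a*(x4-x2)*R24 + 0))) = lam*x2 ->
  b*(y1-y2)*R12 + (0 + (a*(y3-y2)*R23 + (a*(y4-y2)*R24 + 0))) = lam*y2 ->
  b*(x1-x3)*R13 + (b*(x2-x3)*R23 + (0 + (a*(x4-x3)*R34 + 0))) = lam*x3 ->
  b*(y1-y3)*R13 + (b*(y2-y3)*R23 + (0 + (a*(y4-y3)*R34 + 0))) = lam*y3 ->
  b*(x1-x4)*R14 + (b*(x2-x4)*R24 + (a*(x3-x4)*R34 + (0 + 0))) = lam*x4 ->
  b*(y1-y4)*R14 + (b*(y2-y4)*R24 + (a*(y3-y4)*R34 + (0 + 0))) = lam*y4 ->
  let mu := lam / (2*a+2*b) in
  let T4 := (x2-x1)*(y3-y2) - (y2-y1)*(x3-x2) in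
  let T1 := (x3-x2)*(y4-y3) - (y3-y2)*(x4-x3) in
  let T2 := (x4-x3)*(y1-y4) - (y4-y3)*(x1-x4) in
  let T3 := (x1-x4)*(y2-y1) - (y1-y4)*(x2-x1) in
  b*(R12+mu)*T4 - a*(R14+mu)*T2 = 0 /\
  a*(R13+mu)*T4 + a*(R14+mu)*T3 = 0 /\
  - b*(R12+mu)*T3 + a*(R23+mu)*T1 = 0 /\
  b*(R12+mu)*T4 + a*(R24+mu)*T1 = 0 /\
  b*(R13+mu)*T4 + a*(R34+mu)*T1 = 0 /\
  b*(R14+mu)*T3 - a*(R34+mu)*T1 = 0.
Proof.
  intros ha hb cx cy e1x e1y e2x e2y e3x e3y e4x e4y mu T4 T1 T2 T3.
  assert (HM : 2*a+2*b <> 0) by lra.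
  assert (Hl : lam = mu*(2*a+2*b)) by (unfold mu; field; auto).
  rewrite Hl in *.
  assert (V1x : b*(R12+mu)*(x2-x1) + a*(R13+mu)*(x3-x1) + a*(R14+mu)*(x4-x1) = 0) by nra.
  assert (V1y : b*(R12+mu)*(y2-y1) + a*(R13+mu)*(y3-y1) + a*(R14+mu)*(y4-y1) = 0) by nra.
  assert (V2x : b*(R12+mu)*(x1-x2) + a*(R23+mu)*(x3-x2) + a*(R24+mu)*(x4-x2) = 0) by nra.
  assert (V2y : b*(R12+mu)*(y1-y2) + a*(R23+mu)*(y3-y2) + a*(R24+mu)*(y4-y2) = 0) by nra.
  assert (V3x : b*(R13+mu)*(x1-x3) + b*(R23+mu)*(x2-x3) + a*(R34+mu)*(x4-x3) = 0) by nra.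
  assert (V3y : b*(R13+mu)*(y1-y3) + b*(R23+mu)*(y2-y3) + a*(R34+mu)*(y4-y3) = 0) by nra.
  assert (V4x : b*(R14+mu)*(x1-x4) + b*(R24+mu)*(x2-x4) + a*(R34+mu)*(x3-x4) = 0) by nra.
  assert (V4y : b*(R14+mu)*(y1-y4) + b*(R24+mu)*(y2-y4) + a*(R34+mu)*(y3-y4) = 0) by nra.
  unfold T1, T2, T3, T4.
  repeat split.
  - lc V1x V1y (y3-y1) (x3-x1).
  - lc V1x V1y (-(y2-y1)) (-(x2-x1)).
  - lc V2x V2y (y4-y2) (x4-x2).
  - lc V2x V2y (-(y3-y2)) (-(x3-x2)).
  - lc V3x V3y (y2-y3) (x2-x3).
  - lc V4x V4y (y2-y4) (x2-x4).
Qed.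
Lemma gram_false (x1 y1 x2 y2 x3 y3 x4 y4 D : R) :
  0 < D ->
  (x1-x2)^2 + (y1-y2)^2 = D -> (x1-x3)^2 + (y1-y3)^2 = D ->
  (x1-x4)^2 + (y1-y4)^2 = D -> (x2-x3)^2 + (y2-y3)^2 = D ->
  (x2-x4)^2 + (y2-y4)^2 = D -> (x3-x4)^2 + (y3-y4)^2 = D -> False.
Proof.
  intros HD h12 h13 h14 h23 h24 h34.
  set (ux := x2-x1). set (uy := y2-y1). set (vx := x3-x1). set (vy := y3-y1).
  set (wx := x4-x1). set (wy := y4-y1).
  assert (uu : ux*ux+uy*uy = D) by (unfold ux,uy; rewrite <- h12; ring).
  assert (vv : vx*vx+vy*vy = D) by (unfold vx,vy; rewrite <- h13; ring).
  assert (ww : wx*wx+wy*wy = D) by (unfold wx,wy; rewrite <- h14; ring).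
  assert (uv : ux*vx+uy*vy = D/2).
  { assert (E : ux*vx+uy*vy = ((x1-x2)^2 + (y1-y2)^2 + ((x1-x3)^2 + (y1-y3)^2) - ((x2-x3)^2 + (y2-y3)^2))/2) by (unfold ux,uy,vx,vy; field).
    rewrite E, h12, h13, h23; field. }
  assert (uw : ux*wx+uy*wy = D/2).
  { assert (E : ux*wx+uy*wy = ((x1-x2)^2 + (y1-y2)^2 + ((x1-x4)^2 + (y1-y4)^2) - ((x2-x4)^2 + (y2-y4)^2))/2) by (unfold ux,uy,wx,wy; field).
    rewrite E, h12, h14, h24; field. }
  assert (vw : vx*wx+vy*wy = D/2).
  { assert (E : vx*wx+vy*wy = ((x1-x3)^2 + (y1-y3)^2 + ((x1-x4)^2 + (y1-y4)^2) - ((x3-x4)^2 + (y3-y4)^2))/2) by (unfold vx,vy,wx,wy; field).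
    rewrite E, h13, h14, h34; field. }
  assert (G : (ux*ux+uy*uy)*((vx*vx+vy*vy)*(wx*wx+wy*wy) - (vx*wx+vy*wy)*(vx*wx+vy*wy))
     - (ux*vx+uy*vy)*((ux*vx+uy*vy)*(wx*wx+wy*wy) - (vx*wx+vy*wy)*(ux*wx+uy*wy))
     + (ux*wx+uy*wy)*((ux*vx+uy*vy)*(vx*wx+vy*wy) - (vx*vx+vy*vy)*(ux*wx+uy*wy)) = 0) by ring.
  rewrite uu, vv, ww, uv, uw, vw in G.
  assert (G2 : D*D*D = 2*0) by (rewrite <- G; field).
  assert (0 < D*D*D) by (apply Rmult_lt_0_compat; [apply Rmult_lt_0_compat|]; lra).
  lra.
Qed.

Lemma cube_inv_eq (r s : R) : 0 < r -> 0 < s -> / r^3 = / s^3 -> r = s.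
Proof.
  intros hr hs h.
  assert (h3 : r^3 = s^3).
  { rewrite <- (Rinv_inv (r^3)), <- (Rinv_inv (s^3)), h; reflexivity. }
  assert (E : (r - s)*(r*r + r*s + s*s) = 0) by (rewrite Rmult_minus_distr_r; simpl in h3; nra).
  apply Rmult_integral in E; destruct E as [E|E]; nra.
Qed.

Lemma sqr_sqrt_eq (r d : R) : 0 <= d -> r = sqrt d -> r^2 = d.
Proof. intros hd ->. simpl. rewrite Rmult_1_r. apply sqrt_sqrt; auto. Qed.

Lemma alg_main (a b x1 y1 x2 y2 x3 y3 x4 y4 r12 r13 r14 r23 r24 r34 lam : R) :
  0 < a -> a < b ->
  r12 = sqrt ((x1-x2)^2 + (y1-y2)^2) -> r13 = sqrt ((x1-x3)^2 + (y1-y3)^2) ->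
  r14 = sqrt ((x1-x4)^2 + (y1-y4)^2) -> r23 = sqrt ((x2-x3)^2 + (y2-y3)^2) ->
  r24 = sqrt ((x2-x4)^2 + (y2-y4)^2) -> r34 = sqrt ((x3-x4)^2 + (y3-y4)^2) ->
  0 < r12 -> 0 < r13 -> 0 < r14 -> 0 < r23 -> 0 < r24 -> 0 < r34 ->
  r14 = r23 ->
  b*x1 + (b*x2 + (a*x3 + (a*x4 + 0))) = 0 ->
  b*y1 + (b*y2 + (a*y3 + (a*y4 + 0))) = 0 ->
  0 + (b*(x2-x1)*/r12^3 + (a*(x3-x1)*/r13^3 + (a*(x4-x1)*/r14^3 + 0))) = lam*x1 ->
  0 + (b*(y2-y1)*/r12^3 + (a*(y3-y1)*/r13^3 + (a*(y4-y1)*/r14^3 + 0))) = lam*y1 ->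
  b*(x1-x2)*/r12^3 + (0 + (a*(x3-x2)*/r23^3 + (a*(x4-x2)*/r24^3 + 0))) = lam*x2 ->
  b*(y1-y2)*/r12^3 + (0 + (a*(y3-y2)*/r23^3 + (a*(y4-y2)*/r24^3 + 0))) = lam*y2 ->
  b*(x1-x3)*/r13^3 + (b*(x2-x3)*/r23^3 + (0 + (a*(x4-x3)*/r34^3 + 0))) = lam*x3 ->
  b*(y1-y3)*/r13^3 + (b*(y2-y3)*/r23^3 + (0 + (a*(y4-y3)*/r34^3 + 0))) = lam*y3 ->
  b*(x1-x4)*/r14^3 + (b*(x2-x4)*/r24^3 + (a*(x3-x4)*/r34^3 + (0 + 0))) = lam*x4 ->
  b*(y1-y4)*/r14^3 + (b*(y2-y4)*/r24^3 + (a*(y3-y4)*/r34^3 + (0 + 0))) = lam*y4 ->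
  (0 < (x2-x1)*(y3-y2) - (y2-y1)*(x3-x2) /\ 0 < (x3-x2)*(y4-y3) - (y3-y2)*(x4-x3) /\
   0 < (x4-x3)*(y1-y4) - (y4-y3)*(x1-x4) /\ 0 < (x1-x4)*(y2-y1) - (y1-y4)*(x2-x1)) \/
  ((x2-x1)*(y3-y2) - (y2-y1)*(x3-x2) < 0 /\ (x3-x2)*(y4-y3) - (y3-y2)*(x4-x3) < 0 /\
   (x4-x3)*(y1-y4) - (y4-y3)*(x1-x4) < 0 /\ (x1-x4)*(y2-y1) - (y1-y4)*(x2-x1) < 0) ->
  (x2-x1)*(y4-y3) - (y2-y1)*(x4-x3) = 0 /\
  ((x1+x2)/2 - (x3+x4)/2)*(x2-x1) + ((y1+y2)/2 - (y3+y4)/2)*(y2-y1) = 0.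
Proof.
  intros ha hab d12 d13 d14 d23 d24 d34 p12 p13 p14 p23 p24 p34 e1423
    cx cy e1x e1y e2x e2y e3x e3y e4x e4y conv.
  assert (hb : 0 < b) by lra.
  pose proof (cross_eqs a b x1 y1 x2 y2 x3 y3 x4 y4 (/r12^3) (/r13^3) (/r14^3)
     (/r23^3) (/r24^3) (/r34^3) lam ha hb cx cy e1x e1y e2x e2y e3x e3y e4x e4y) as C.
  cbv zeta in C.
  set (mu := lam / (2*a+2*b)) in C.
  set (T4 := (x2-x1)*(y3-y2) - (y2-y1)*(x3-x2)) in *.
  set (T1 := (x3-x2)*(y4-y3) - (y3-y2)*(x4-x3)) in *.
  set (T2 := (x4-x3)*(y1-y4) - (y4-y3)*(x1-x4)) in *.
  set (T3 := (x1-x4)*(y2-y1) - (y1-y4)*(x2-x1)) in *.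
  rewrite <- e1423 in C.
  set (s := /r14^3 + mu) in C.
  set (s12 := /r12^3 + mu) in C. set (s13 := /r13^3 + mu) in C.
  set (s24 := /r24^3 + mu) in C. set (s34 := /r34^3 + mu) in C.
  destruct C as [c1b [c1c [c2a [c2b [c3b c4b]]]]].
  assert (nT4 : T4 <> 0) by (destruct conv; lra).
  assert (nT1 : T1 <> 0) by (destruct conv; lra).
  assert (nK : T1 + T3 <> 0) by (destruct conv; lra).
  destruct (Req_dec s 0) as [s0 | s0].
  - exfalso.
    rewrite s0 in c1b, c1c, c2a.
    assert (z12 : s12 = 0).
    { assert (b*T4*s12 = 0) by (rewrite <- c1b; ring).
      apply Rmult_integral in H; destruct H as [H|H]; auto.
      apply Rmult_integral in H; destruct H; [lra | contradiction]. }
    assert (z13 : s13 = 0).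
    { assert (a*T4*s13 = 0) by (rewrite <- c1c; ring).
      apply Rmult_integral in H; destruct H as [H|H]; auto.
      apply Rmult_integral in H; destruct H; [lra | contradiction]. }
    rewrite z12 in c2b. rewrite z13 in c3b.
    assert (z24 : s24 = 0).
    { assert (a*T1*s24 = 0) by (rewrite <- c2b; ring).
      apply Rmult_integral in H; destruct H as [H|H]; auto.
      apply Rmult_integral in H; destruct H; [lra | contradiction]. }
    assert (z34 : s34 = 0).
    { assert (a*T1*s34 = 0) by (rewrite <- c3b; ring).
      apply Rmult_integral in H; destruct H as [H|H]; auto.
      apply Rmult_integral in H; destruct H; [lra | contradiction]. }
    unfold s, s12, s13, s24, s34 in *.
    assert (q13 : r12 = r13) by (apply cube_inv_eq; auto; lra).
    assert (q14 : r12 = r14) by (apply cube_inv_eq; auto; lra).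
    assert (q24 : r12 = r24) by (apply cube_inv_eq; auto; lra).
    assert (q34 : r12 = r34) by (apply cube_inv_eq; auto; lra).
    apply (gram_false x1 y1 x2 y2 x3 y3 x4 y4 (r12^2)).
    + nra.
    + symmetry; apply sqr_sqrt_eq; auto; apply Rplus_le_le_0_compat; apply pow2_ge_0.
    + rewrite q13; symmetry; apply sqr_sqrt_eq; auto; apply Rplus_le_le_0_compat; apply pow2_ge_0.
    + rewrite q14; symmetry; apply sqr_sqrt_eq; auto; apply Rplus_le_le_0_compat; apply pow2_ge_0.
    + rewrite q14, e1423; symmetry; apply sqr_sqrt_eq; auto; apply Rplus_le_le_0_compat; apply pow2_ge_0.
    + rewrite q24; symmetry; apply sqr_sqrt_eq; auto; apply Rplus_le_le_0_compat; apply pow2_ge_0.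
    + rewrite q34; symmetry; apply sqr_sqrt_eq; auto; apply Rplus_le_le_0_compat; apply pow2_ge_0.
  - assert (HT : (a*s)*(T1*T4 - T2*T3) = 0) by lc c1b c2a T3 (-T4).
    assert (HT2 : T1*T4 - T2*T3 = 0).
    { apply Rmult_integral in HT; destruct HT as [H|H]; auto.
      apply Rmult_integral in H; destruct H; [lra | contradiction]. }
    assert (HP : (x2-x1)*(y4-y3) - (y2-y1)*(x4-x3) = 0).
    { assert (I : T1*T4 - T2*T3 = -((x2-x1)*(y4-y3) - (y2-y1)*(x4-x3))*(T1+T3))
        by (unfold T1, T2, T3, T4; ring).
      rewrite HT2 in I.
      assert (I2 : ((x2-x1)*(y4-y3) - (y2-y1)*(x4-x3))*(T1+T3) = 0) by lra.
      apply Rmult_integral in I2; destruct I2; [auto | contradiction]. }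
    split; [exact HP|].
    set (ux := x2-x1). set (uy := y2-y1).
    set (zx := (x4-x1)-(x3-x2)). set (zy := (y4-y1)-(y3-y2)).
    set (px := (x4-x1)+(x3-x2)). set (py := (y4-y1)+(y3-y2)).
    assert (dq : (x1-x4)^2 + (y1-y4)^2 = (x2-x3)^2 + (y2-y3)^2).
    { rewrite <- (sqr_sqrt_eq r14 ((x1-x4)^2 + (y1-y4)^2)), <- (sqr_sqrt_eq r23 ((x2-x3)^2 + (y2-y3)^2)); auto;
      try (apply Rplus_le_le_0_compat; apply pow2_ge_0); rewrite e1423; auto. }
    assert (zp : zx*px + zy*py = 0) by (unfold zx, zy, px, py; rewrite <- (Rminus_diag_eq _ _ dq); ring).
    assert (uz : ux*zy - uy*zx = 0) by (unfold ux, uy, zx, zy; rewrite <- HP; ring).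
    assert (Id : (ux*px+uy*py)*(zx*zx+zy*zy) = (ux*zx+uy*zy)*(zx*px+zy*py) + (ux*zy-uy*zx)*(px*zy - py*zx)) by ring.
    rewrite zp, uz in Id.
    transitivity (-(ux*px+uy*py)/2); [unfold ux, uy, px, py; field|].
    destruct (Req_dec (zx*zx+zy*zy) 0) as [Z | Z].
    + exfalso.
      destruct (Rplus_sqr_eq_0 zx zy Z) as [zx0 zy0].
      assert (ex4 : x4 = x1 + x3 - x2) by (unfold zx in zx0; lra).
      assert (ey4 : y4 = y1 + y3 - y2) by (unfold zy in zy0; lra).
      assert (eT2 : T2 = T4) by (unfold T2, T4; rewrite ex4, ey4; ring).
      assert (eT1 : T1 = T4) by (unfold T1, T4; rewrite ex4, ey4; ring).
      assert (eT3 : T3 = T4) by (unfold T3, T4; rewrite ex4, ey4; ring).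
      assert (r1234 : r12 = r34).
      { rewrite d12, d34; f_equal; rewrite ex4, ey4; ring. }
      assert (ss : s34 = s12) by (unfold s34, s12; rewrite r1234; reflexivity).
      rewrite eT2 in c1b. rewrite eT3, eT1, ss in c4b.
      assert (f1 : T4*(b*s12 - a*s) = 0) by (rewrite <- c1b; ring).
      assert (f2 : T4*(b*s - a*s12) = 0) by (rewrite <- c4b; ring).
      apply Rmult_integral in f1; destruct f1 as [f1|f1]; [contradiction|].
      apply Rmult_integral in f2; destruct f2 as [f2|f2]; [contradiction|].
      assert (g : (b*b - a*a)*s12 = 0).
      { transitivity (b*(b*s12 - a*s) + a*(b*s - a*s12)); [ring| rewrite f1, f2; ring]. }
      assert (nba : b*b - a*a <> 0).
      { clear - ha hab. nra. }
      apply Rmult_integral in g; destruct g as [g|g]; [contradiction|].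
      rewrite g in f1. apply s0.
      assert (f3 : a * s = 0) by lra.
      apply Rmult_integral in f3; destruct f3; [lra|auto].
    + assert (K : ux*px+uy*py = 0).
      { assert (Id2 : (ux*px+uy*py)*(zx*zx+zy*zy) = 0) by (rewrite Id; ring).
        apply Rmult_integral in Id2; destruct Id2; [auto | contradiction]. }
      rewrite K; field.
Qed.

Lemma rdist_sym (p q : pt) : rdist p q = rdist q p.
Proof. unfold rdist; f_equal; ring. Qed.

Lemma rdist_pos (p q : pt) : p <> q -> 0 < rdist p q.
Proof.
  destruct p as [a b], q as [c d]; intros H; unfold rdist; simpl.
  apply sqrt_lt_R0.
  destruct (Rle_lt_dec ((a-c)^2 + (b-d)^2) 0) as [h|h]; auto.
  exfalso. apply H.
  replace ((a-c)^2) with ((a-c)*(a-c)) in h by ring.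
  replace ((b-d)^2) with ((b-d)*(b-d)) in h by ring.
  assert (h2 : (a-c)*(a-c) + (b-d)*(b-d) = 0).
  { pose proof (Rle_0_sqr (a-c)); pose proof (Rle_0_sqr (b-d)); unfold Rsqr in *; lra. }
  destruct (Rplus_sqr_eq_0 (a-c) (b-d) h2) as [e1 e2].
  f_equal; lra.
Qed.

Theorem theorem1p2 (alpha beta : R) (m : nat -> R) (q : nat -> pt) :
  0 < alpha -> alpha < beta ->
  m 1%nat = beta -> m 2%nat = beta -> m 3%nat = alpha -> m 4%nat = alpha ->
  central_configuration m q ->
  convex_cyclic q ->
  rdist (q 1%nat) (q 4%nat) = rdist (q 2%nat) (q 3%nat) ->
  symmetric_isosceles_trapezoid q /\
  parallel (q 1%nat) (q 2%nat) (q 3%nat) (q 4%nat) /\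
  rdist (q 1%nat) (q 4%nat) = rdist (q 2%nat) (q 3%nat).
Proof.
  intros ha hab hm1 hm2 hm3 hm4 CC conv e.
  destruct CC as [Hd [Hcx [Hcy [lam Hl]]]].
  destruct (Hl 1%nat) as [E1x E1y]; [simpl; tauto|].
  destruct (Hl 2%nat) as [E2x E2y]; [simpl; tauto|].
  destruct (Hl 3%nat) as [E3x E3y]; [simpl; tauto|].
  destruct (Hl 4%nat) as [E4x E4y]; [simpl; tauto|].
  assert (n12 := Hd 1%nat 2%nat ltac:(simpl; tauto) ltac:(simpl; tauto) ltac:(discriminate)).
  assert (n13 := Hd 1%nat 3%nat ltac:(simpl; tauto) ltac:(simpl; tauto) ltac:(discriminate)).
  assert (n14 := Hd 1%nat 4%nat ltac:(simpl; tauto) ltac:(simpl; tauto) ltac:(discriminate)).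
  assert (n23 := Hd 2%nat 3%nat ltac:(simpl; tauto) ltac:(simpl; tauto) ltac:(discriminate)).
  assert (n24 := Hd 2%nat 4%nat ltac:(simpl; tauto) ltac:(simpl; tauto) ltac:(discriminate)).
  assert (n34 := Hd 3%nat 4%nat ltac:(simpl; tauto) ltac:(simpl; tauto) ltac:(discriminate)).
  clear Hl Hd.
  unfold sumR, idx in *. cbn [fold_right Nat.eqb] in *.
  rewrite hm1, hm2, hm3, hm4 in *.
  unfold convex_cyclic, turn in conv.
  unfold symmetric_isosceles_trapezoid, parallel.
  rewrite (rdist_sym (q 2%nat) (q 1%nat)), (rdist_sym (q 3%nat) (q 1%nat)),
    (rdist_sym (q 4%nat) (q 1%nat)), (rdist_sym (q 3%nat) (q 2%nat)),
    (rdist_sym (q 4%nat) (q 2%nat)), (rdist_sym (q 4%nat) (q 3%nat)) in *.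
  apply rdist_pos in n12, n13, n14, n23, n24, n34.
  unfold Rdiv in E1x, E1y, E2x, E2y, E3x, E3y, E4x, E4y.
  set (p1 := q 1%nat) in *. set (p2 := q 2%nat) in *.
  set (p3 := q 3%nat) in *. set (p4 := q 4%nat) in *.
  clearbody p1 p2 p3 p4.
  destruct p1 as [x1 y1], p2 as [x2 y2], p3 as [x3 y3], p4 as [x4 y4].
  cbn [fst snd] in *.
  assert (HH := alg_main alpha beta x1 y1 x2 y2 x3 y3 x4 y4
    (rdist (x1,y1) (x2,y2)) (rdist (x1,y1) (x3,y3)) (rdist (x1,y1) (x4,y4))
    (rdist (x2,y2) (x3,y3)) (rdist (x2,y2) (x4,y4)) (rdist (x3,y3) (x4,y4)) lam
    ha hab eq_refl eq_refl eq_refl eq_refl eq_refl eq_refl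
    n12 n13 n14 n23 n24 n34 e Hcx Hcy E1x E1y E2x E2y E3x E3y E4x E4y conv).
  destruct HH as [H1 H2].
  split; [split|split]; auto.
Qed.
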